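(* Let $k\ge 2$ be an integer and let $G$ be a graph of order $n$ with $\delta(G)\ge k$. Then $\mathrm{TC}_k(G)\le n-k+1$, with equality if and only if $G\cong K_k\vee G'$ for some graph $G'$ of order $n-k$.
   Context: All graphs are finite, simple and connected. $N(v)$ denotes the open neighborhood of $v$. For a graph $G$ with $\delta(G)\ge k$, a set $S\subseteq V(G)$ is a total $k$-dominating set if $|N(v)\cap S|\ge k$ for every $v\in V(G)$. Two disjoint sets $U,W\subseteq V(G)$ form a total $k$-coalition if neither is a total $k$-dominating set but $U\cup W$ is. A total $k$-coalition partition of $G$ is a partition $\Omega$ of $V(G)$ in which every set forms a total $k$-coalition with some other set of $\Omega$; $\mathrm{TC}_k(G)$ is the maximum cardinality of such a partition. $K_k\vee G'$ denotes the join of the complete graph $K_k$ and $G'$ (disjoint union plus all edges between them). *)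

(* Defs.v *)
From mathcomp Require Import all_boot.
Set Implicit Arguments. Unset Strict Implicit. Unset Printing Implicit Defensive.

Definition simple_graph (T : finType) (e : rel T) : Prop :=
  symmetric e /\ irreflexive e.

Definition connected_graph (T : finType) (e : rel T) : Prop :=
  forall x y : T, connect e x y.

Definition nbhd (T : finType) (e : rel T) (v : T) : {set T} := [set u | e v u].

Definition min_degree_ge (T : finType) (e : rel T) (k : nat) : Prop :=
  forall v : T, k <= #|nbhd e v|.

Definition total_k_dom (T : finType) (e : rel T) (k : nat) (S : {set T}) : bool :=
  [forall v : T, k <= #|nbhd e v :&: S|].

Definition total_k_coalition (T : finType) (e : rel T) (k : nat) (U W : {set T}) : bool :=
  [disjoint U & W] && ~~ total_k_dom e k U && ~~ total_k_dom e k W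
  && total_k_dom e k (U :|: W).

Definition total_k_coalition_partition (T : finType) (e : rel T) (k : nat)
    (P : {set {set T}}) : bool :=
  partition P [set: T] &&
  [forall U in P, exists W in P, (W != U) && total_k_coalition e k U W].

Definition TC (T : finType) (e : rel T) (k : nat) : nat :=
  \max_(P : {set {set T}} | total_k_coalition_partition e k P) #|P|.

(* adjacency of the join K_k \/ G' on vertex set 'I_k + V(G') *)
Definition join_Kk_rel (k : nat) (V : finType) (e' : rel V)
    (a b : 'I_k + V) : bool :=
  match a, b with
  | inl i, inl j => i != j
  | inr x, inr y => e' x y
  | _, _ => true
  end.

Definition iso_to_join_Kk (T : finType) (e : rel T) (k m : nat) : Prop :=
  exists e' : rel 'I_m, simple_graph e' /\
    exists f : T -> 'I_k + 'I_m, bijective f /\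
      forall x y : T, e x y = join_Kk_rel e' (f x) (f y).

(* Main.v *)
Require Import Defs.
From mathcomp Require Import all_boot.
From mathcomp Require Import zify.

Set Implicit Arguments. Unset Strict Implicit. Unset Printing Implicit Defensive.

Section Aux.
Variables (T : finType) (e : rel T) (k : nat).
Hypothesis Hsimple : simple_graph e.
Hypothesis Hk : 2 <= k.

Lemma nbhdE v u : (u \in nbhd e v) = e v u.
Proof. by rewrite inE. Qed.

Lemma nbhdI_sub v (S : {set T}) : v \in S -> nbhd e v :&: S \subset S :\ v.
Proof.
move=> _; apply/subsetP=> u; rewrite !inE => /andP[evu uS].
rewrite uS andbT; apply/eqP=> uv; subst u.
by case: Hsimple => _ irr; rewrite irr in evu.
Qed.

Lemma tkd_card (S : {set T}) : total_k_dom e k S -> forall x : T, k < #|S|.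
Proof.
move=> /forallP tS x.
have h1 := tS x.
have : 0 < #|S|.
  apply: (leq_trans _ (subset_leq_card (subsetIr (nbhd e x) S))).
  by apply: leq_trans h1; apply: leq_trans Hk.
rewrite card_gt0 => /set0Pn[v vS].
have h2 := tS v.
have h3 := subset_leq_card (nbhdI_sub vS).
rewrite (cardsD1 v S) vS in h3 *.
by rewrite /= add1n ltnS (leq_trans h2 h3).
Qed.

Lemma tkd_clique (S : {set T}) : total_k_dom e k S -> #|S| = k.+1 ->
  forall u v, u \in S -> v \in S -> u != v -> e u v.
Proof.
move=> /forallP tS cS u v uS vS uv.
have sub := nbhdI_sub uS.
have : nbhd e u :&: S == S :\ u.
  rewrite eqEcard sub /=.
  have := tS u; have := cardsD1 u S; rewrite uS cS; lia.
move=> /eqP eq.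
have : v \in S :\ u by rewrite !inE eq_sym uv vS.
by rewrite -eq !inE => /andP[].
Qed.

End Aux.

Section Part.
Variables (T : finType) (P : {set {set T}}).
Hypothesis Hp : partition P [set: T].
Implicit Types A B C D : {set T}.

Lemma part_ne C : C \in P -> 0 < #|C|.
Proof.
move: Hp => /and3P[_ _ n0] CP; rewrite card_gt0; apply/eqP=> C0.
by rewrite -C0 CP in n0.
Qed.

Lemma part_disj A B : A \in P -> B \in P -> A != B -> [disjoint A & B].
Proof. by move: Hp => /and3P[_ /trivIsetP tI _]; apply: tI. Qed.

Lemma cardU_disj A B : [disjoint A & B] -> #|A :|: B| = #|A| + #|B|.
Proof. by move=> d; have := cardsUI A B; rewrite (disjoint_setI0 d) cards0 addn0. Qed.

Lemma part_sum A B : A \in P -> B \in P -> A != B ->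
  #|T| = #|A :|: B| + \sum_(C in P :\ A :\ B) #|C|.
Proof.
move=> AP BP AB.
rewrite (cardU_disj (part_disj AP BP AB)).
rewrite -cardsT (card_partition Hp) (bigD1 A AP) /= (bigD1 B) /=; last first.
  by apply/andP; split; [exact: BP | rewrite eq_sym].
rewrite addnA; congr (_ + _); apply: eq_bigl => C; rewrite !inE.
by rewrite andbC; congr (_ && _); rewrite andbC.
Qed.

Lemma rest_ge A B : #|P :\ A :\ B| <= \sum_(C in P :\ A :\ B) #|C|.
Proof.
rewrite -sum1_card; apply: leq_sum => C; rewrite !inE => /andP[_ /andP[_ CP]].
exact: part_ne.
Qed.

Lemma rest_gt A B (C0 : {set T}) : C0 \in P :\ A :\ B -> 2 <= #|C0| ->
  #|P :\ A :\ B| < \sum_(C in P :\ A :\ B) #|C|.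
Proof.
move=> C0R c2.
rewrite (big_setD1 _ C0R) /=.
have h : #|(P :\ A :\ B) :\ C0| <= \sum_(i in (P :\ A :\ B) :\ C0) #|i|.
  rewrite -sum1_card.
  apply: leq_sum => C; rewrite !inE => /andP[_ /andP[_ /andP[_ CP]]].
  exact: part_ne.
have := cardsD1 C0 (P :\ A :\ B); rewrite C0R add1n.
move=> ->; exact: (leq_add c2 h).
Qed.

End Part.

Lemma cardR (T : finType) (P : {set {set T}}) (A B : {set T}) :
  A \in P -> B \in P -> A != B -> #|P| = #|P :\ A :\ B| + 2.
Proof.
move=> AP BP AB.
rewrite (cardsD1 A P) AP (cardsD1 B (P :\ A)) !inE BP eq_sym AB /=.
by rewrite add1n add1n addn2.
Qed.

Section Main.
Variables (T : finType) (e : rel T) (k : nat).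
Hypothesis Hsimple : simple_graph e.
Hypothesis Hk : 2 <= k.
Implicit Types A B C D U W : {set T}.

Lemma upper P : total_k_coalition_partition e k P -> #|P| <= #|T| - k + 1.
Proof.
move=> /andP[Hp /forall_inP hP].
have [P0|] := eqVneq P set0; first by rewrite P0 cards0.
case/set0Pn=> A AP.
have /existsP[B /andP[BP /andP[BA]]] := hP A AP.
case/andP=> /andP[/andP[_ _] _] tAB.
have /card_gt0P[x _] := part_ne Hp AP.
have AB : A != B by rewrite eq_sym.
have h1 := tkd_card Hsimple Hk tAB x.
have h2 := part_sum Hp AP BP AB.
have h3 := rest_ge Hp A B.
have h4 := cardR AP BP AB.
lia.
Qed.

Lemma key P A B : partition P [set: T] -> #|P| = #|T| - k + 1 ->
  A \in P -> B \in P -> A != B -> total_k_dom e k (A :|: B) ->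
  #|A :|: B| = k.+1 /\ forall C, C \in P -> C != A -> C != B -> #|C| = 1.
Proof.
move=> Hp cP AP BP AB tAB.
have /card_gt0P[x _] := part_ne Hp AP.
have h1 := tkd_card Hsimple Hk tAB x.
have h2 := part_sum Hp AP BP AB.
have h3 := rest_ge Hp A B.
have h4 := cardR AP BP AB.
split; first lia.
move=> C CP CA CB.
have C1 := part_ne Hp CP.
case: (leqP #|C| 1) => c2; first lia.
have CR : C \in P :\ A :\ B by rewrite !inE CA CB CP.
have := rest_gt Hp CR c2.
lia.
Qed.

Lemma partnerL P Z Y : total_k_coalition_partition e k P -> #|P| = #|T| - k + 1 ->
  Z \in P -> #|Z| = 1 -> Y \in P -> Y != Z -> 2 <= #|Y| ->
  [/\ #|Z :|: Y| = k.+1, total_k_dom e k (Z :|: Y) &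
      forall C, C \in P -> C != Z -> C != Y -> #|C| = 1].
Proof.
move=> /andP[Hp /forall_inP hP] cP ZP Z1 YP YZ Y2.
have /existsP[Y' /andP[Y'P /andP[Y'Z]]] := hP Z ZP.
case/andP=> /andP[/andP[_ _] _] tZY.
have ZY' : Z != Y' by rewrite eq_sym.
have [c1 oth] := key Hp cP ZP Y'P ZY' tZY.
have [YY'|YY'] := eqVneq Y Y'.
  by subst Y'; split.
have := oth Y YP YZ YY'; lia.
Qed.

Definition univ D := forall d w, d \in D -> w != d -> e d w.

Lemma univ_of P Y C : total_k_coalition_partition e k P -> #|P| = #|T| - k + 1 ->
  Y \in P -> C \in P -> C != Y -> #|C| = 1 -> 2 <= #|Y| -> #|Y| = k /\ univ Y.
Proof.
move=> HP cP YP CP CY C1 Y2.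
have Hp : partition P [set: T] by case/andP: HP.
have YC : Y != C by rewrite eq_sym.
have [c1 tCY oth] := partnerL HP cP CP C1 YP YC Y2.
split.
  by move: c1; rewrite (cardU_disj (part_disj Hp CP YP CY)) C1 add1n => -[].
move=> d w dY wd.
have : w \in cover P by move: Hp => /and3P[/eqP -> _ _]; rewrite inE.
case/bigcupP=> W WP wW.
have [WY|WY] := eqVneq W Y.
  subst W.
  apply: (tkd_clique Hsimple Hk tCY c1); by rewrite ?inE ?dY ?wW ?orbT // eq_sym.
have W1 : #|W| = 1.
  have [WC|WC] := eqVneq W C; first by subst W.
  exact: oth.
have YW : Y != W by rewrite eq_sym.
have [c1' tWY _] := partnerL HP cP WP W1 YP YW Y2.
apply: (tkd_clique Hsimple Hk tWY c1'); by rewrite ?inE ?dY ?wW ?orbT // eq_sym.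
Qed.

Lemma fwd : TC e k = #|T| - k + 1 -> exists D, #|D| = k /\ univ D.
Proof.
case: (pickP (total_k_coalition_partition e k)) => [P0 HP0 | none]; last first.
  rewrite /TC big_pred0 //; lia.
rewrite /TC (bigmax_eq_arg P0 HP0).
case: arg_maxnP => // P HP _ cP.
have Hp : partition P [set: T] by case/andP: HP.
have /card_gt0P[A AP] : 0 < #|P| by lia.
have /existsP[B /andP[BP /andP[BA]]] := (forall_inP (proj2 (andP HP))) A AP.
case/andP=> /andP[/andP[_ _] _] tAB.
have AB : A != B by rewrite eq_sym.
have [cAB oth] := key Hp cP AP BP AB tAB.
have dAB := cardU_disj (part_disj Hp AP BP AB).
have [R0|] := eqVneq (P :\ A :\ B) set0.
  have h2 := part_sum Hp AP BP AB.
  rewrite R0 big_set0 addn0 in h2.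
  have ABT : A :|: B = [set: T].
    apply/eqP; rewrite eqEcard subsetT cardsT /=; move: h2; set a := #|T|; lia.
  have /card_gt0P[x0 x0A] := part_ne Hp AP.
  exists ((A :|: B) :\ x0); split.
    have := cardsD1 x0 (A :|: B); rewrite inE x0A /= cAB add1n => -[] //.
  move=> d w; rewrite in_setD1 => /andP[_ dAB'] wd.
  have wAB : w \in A :|: B by rewrite ABT inE.
  have dw : d != w by rewrite eq_sym.
  exact: (tkd_clique Hsimple Hk tAB cAB dAB' wAB dw).
case/set0Pn=> C CR.
have CP : C \in P by move: CR; rewrite !inE => /andP[_ /andP[_ ->]].
have CA : C != A by move: CR; rewrite !inE => /andP[_ /andP[->]].
have CB : C != B by move: CR; rewrite !inE => /andP[->].
have C1 := oth C CP CA CB.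
have [A2|A1] := leqP 2 #|A|.
  exists A; exact: univ_of HP cP AP CP CA C1 A2.
have B2 : 2 <= #|B| by lia.
exists B; exact: univ_of HP cP BP CP CB C1 B2.
Qed.

Lemma iso_of_univ D : #|D| = k -> univ D -> iso_to_join_Kk e k (#|T| - k).
Proof.
move=> cD uD.
have /card_gt0P[x0 x0D] : 0 < #|D| by lia.
have cC := cardsC D.
set m := #|T| - k.
have sD : size (enum D) = k by rewrite -cardE.
have sC : size (enum (~: D)) = m by rewrite -cardE /m; lia.
pose g (a : 'I_k + 'I_m) : T :=
  match a with inl i => nth x0 (enum D) i | inr j => nth x0 (enum (~: D)) j end.
have gl i : g (inl i) \in D.
  by rewrite /= -mem_enum; apply: mem_nth; rewrite sD.
have gr j : g (inr j) \notin D.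
  have : g (inr j) \in ~: D by rewrite /= -mem_enum; apply: mem_nth; rewrite sC.
  by rewrite inE.
have ginj : injective g.
  case=> [i|i] [j|j] /=.
  - move/eqP; rewrite nth_uniq ?sD ?enum_uniq // => /eqP ij.
    by congr inl; apply: val_inj.
  - by move=> h; have := gr j; rewrite /= -h (gl i).
  - by move=> h; have := gr i; rewrite /= h (gl j).
  - move/eqP; rewrite nth_uniq ?sC ?enum_uniq // => /eqP ij.
    by congr inr; apply: val_inj.
have gbij : bijective g.
  apply: (inj_card_bij ginj); rewrite card_sum !card_ord /m; lia.
case: gbij => f gK fK.
case: Hsimple => Hsym Hirr.
exists (fun i j : 'I_m => e (g (inr i)) (g (inr j))); split.
  split; first by move=> i j; apply: Hsym.
  by move=> i; apply: Hirr.
exists f; split; first by exists g.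
move=> x y.
have [a ->] : exists a, x = g a by exists (f x); rewrite fK.
have [b ->] : exists b, y = g b by exists (f y); rewrite fK.
rewrite !gK.
case: a => [i|i]; case: b => [j|j]; rewrite [join_Kk_rel _ _ _]/=.
- have [->|ij] := eqVneq i j; first by rewrite Hirr.
  apply: uD; first exact: gl.
  by apply/eqP=> h; move/eqP: ij; apply; have := ginj _ _ h => -[].
- apply: uD; first exact: gl.
  by apply/eqP=> h; have := gr j; rewrite h gl.
- rewrite Hsym; apply: uD; first exact: gl.
  by apply/eqP=> h; have := gr i; rewrite h gl.
- by [].
Qed.

Lemma coal U a : #|U| = k -> univ U -> a \notin U ->
  total_k_coalition e k U [set a] && total_k_coalition e k [set a] U.
Proof.
move=> cU uU aU.
case: Hsimple => Hsym Hirr.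
have /card_gt0P[u0 u0U] : 0 < #|U| by lia.
have nU : ~~ total_k_dom e k U.
  apply/forallPn; exists u0; rewrite -ltnNge.
  have := subset_leq_card (nbhdI_sub Hsimple u0U).
  have := cardsD1 u0 U; rewrite u0U cU; lia.
have na : ~~ total_k_dom e k [set a].
  apply/forallPn; exists a; rewrite -ltnNge.
  have := subset_leq_card (subsetIr (nbhd e a) [set a]); rewrite cards1; lia.
have tUa : total_k_dom e k (U :|: [set a]).
  apply/forallP=> v.
  case vU: (v \in U).
    have sub : a |: (U :\ v) \subset nbhd e v :&: (U :|: [set a]).
      apply/subsetP=> w; rewrite !inE => /orP[/eqP ->|/andP[wv wU]].
        rewrite eqxx orbT andbT; apply: uU => //.
        by apply/eqP=> av; rewrite av vU in aU.
      by rewrite wU andbT; apply: uU.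
    have := subset_leq_card sub.
    rewrite cardsU1 in_setD1 (negbTE aU) andbF /=.
    have := cardsD1 v U; rewrite vU cU; lia.
  have sub : U \subset nbhd e v :&: (U :|: [set a]).
    apply/subsetP=> w wU; rewrite !inE wU andbT Hsym; apply: uU => //.
    by apply/eqP=> vw; rewrite vw wU in vU.
  by rewrite -cU; apply: subset_leq_card.
have d : [disjoint U & [set a]] by rewrite disjoint_sym disjoints1.
apply/andP; split.
  rewrite /total_k_coalition d nU na tUa. done.
by rewrite /total_k_coalition disjoint_sym d na nU setUC tUa.
Qed.

Lemma conv U : min_degree_ge e k -> #|U| = k -> univ U -> #|T| - k + 1 <= TC e k.
Proof.
move=> Hdeg cU uU.
have /card_gt0P[u0 u0U] : 0 < #|U| by lia.
have [w wN wU] : exists2 w, w \in nbhd e u0 & w \notin U.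
  case/boolP: [exists x in nbhd e u0, x \notin U] => [/exists_inP //| /exists_inPn H].
  exfalso.
  have sub : nbhd e u0 \subset nbhd e u0 :&: U.
    apply/subsetP=> x xN; rewrite inE xN /=.
    by have := H x xN; rewrite negbK.
  have := subset_leq_card (subset_trans sub (nbhdI_sub Hsimple u0U)).
  have := Hdeg u0; have := cardsD1 u0 U; rewrite u0U cU; lia.
pose Q := U |: [set [set x] | x in ~: U].
have inQ A : A \in Q -> A = U \/ exists2 a, a \notin U & A = [set a].
  rewrite !inE => /orP[/eqP->|/imsetP[a]]; first by left.
  by rewrite inE => aU ->; right; exists a.
have U0 : U != set0 by apply/set0Pn; exists u0.
have HQ : total_k_coalition_partition e k Q.
  apply/andP; split.
    apply/and3P; split.
    - apply/eqP/setP=> x; rewrite inE; apply/bigcupP.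
      case xU: (x \in U); first by exists U; rewrite ?setU11.
      exists [set x]; last by rewrite inE.
      by rewrite !inE; apply/orP; right; apply/imsetP; exists x; rewrite ?inE ?xU.
    - apply/trivIsetP=> A B /inQ[->|[a aU ->]] /inQ[->|[b bU ->]] AB.
      + by rewrite eqxx in AB.
      + by rewrite disjoint_sym disjoints1.
      + by rewrite disjoints1.
      + rewrite disjoints1 inE; apply: contra AB => /eqP ->; by [].
    - apply/negP=> /inQ[E|[a _ E]].
        by rewrite -E eqxx in U0.
      by have := cards1 a; rewrite -E cards0.
  apply/forall_inP=> A /inQ[->|[a aU ->]].
    apply/exists_inP; exists [set w].
      by rewrite !inE; apply/orP; right; apply/imsetP; exists w; rewrite ?inE.
    have /andP[c1 _] := coal cU uU wU.
    rewrite c1 andbT; apply/negP=> /eqP E.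
    by have := cards1 w; rewrite E cU; lia.
  apply/exists_inP; exists U; first by rewrite setU11.
  have /andP[_ c2] := coal cU uU aU.
  rewrite c2 andbT; apply/negP=> /eqP E.
  by have := cards1 a; rewrite -E cU; lia.
have cQ : #|Q| = 1 + #|~: U|.
  rewrite /Q cardsU1 (card_imset _ set1_inj).
  suff -> : U \notin [set [set x] | x in ~: U] by [].
  apply/imsetP=> -[x]; rewrite inE => xU E.
  by have := cards1 x; rewrite -E cU; lia.
have := @leq_bigmax_cond _ _ (fun P : {set {set T}} => #|P|) Q HQ.
rewrite -/(TC e k) cQ.
have := cardsC U; rewrite cU; lia.
Qed.

Lemma iso_univ m : iso_to_join_Kk e k m -> exists D, #|D| = k /\ univ D.
Proof.
case=> e' [_ [f [[g fK gK] hE]]].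
exists [set g (inl i) | i : 'I_k]; split.
  rewrite card_imset ?card_ord //.
  by move=> i j /(can_inj gK) [].
move=> u w /imsetP[i _ ->] wu.
rewrite hE gK.
case Ew: (f w) => [j|j] //=.
apply/eqP=> ij; subst j.
by move/eqP: wu; apply; rewrite -Ew fK.
Qed.

End Main.

Theorem proposition3p2 (k : nat) (T : finType) (e : rel T)
  (Hsimple : simple_graph e) (Hconn : connected_graph e)
  (Hk : 2 <= k) (Hdeg : min_degree_ge e k) :
  TC e k <= #|T| - k + 1 /\
  (TC e k = #|T| - k + 1 <-> iso_to_join_Kk e k (#|T| - k)).
Proof.
have up : TC e k <= #|T| - k + 1.
  by apply/bigmax_leqP => P HP; apply: (upper Hsimple Hk HP).
split=> //; split.
  move=> h; have [D [cD uD]] := fwd Hsimple Hk h.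
  exact: (iso_of_univ Hsimple Hk cD uD).
move=> /iso_univ [D [cD uD]].
have := conv Hsimple Hk Hdeg cD uD.
lia.
Qed.
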